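(* Let $\Theta\subset\mathbb{R}^p$ be compact and convex, let $\mathcal U$ be an open neighborhood of $\Theta$, and let $\mathscr F:\mathcal U\to\mathbb{R}$ be continuously differentiable. Let $\mathscr G:\Theta\times\Theta\to\mathbb R$ be differentiable in its first argument and satisfy, for all $\boldsymbol\theta,\boldsymbol\theta'\in\Theta$: (majorization) $\mathscr G(\boldsymbol\theta\mid\boldsymbol\theta')\ge\mathscr F(\boldsymbol\theta)$; (strong tangency) $\mathscr G(\boldsymbol\theta\mid\boldsymbol\theta)=\mathscr F(\boldsymbol\theta)$ and $\nabla_1\mathscr G(\boldsymbol\theta\mid\boldsymbol\theta)=\nabla\mathscr F(\boldsymbol\theta)$; (regularity) for each fixed $\boldsymbol\theta'$, $\nabla_1\mathscr G(\cdot\mid\boldsymbol\theta')$ is $L$-Lipschitz on $\Theta$. Let $(\varepsilon_t)_{t\ge0}$, $(\delta_t)_{t\ge0}$ be sequences of strictly positive numbers with $\sum_t\varepsilon_t<\infty$ and $\sum_t\delta_t\le\delta$ for some $\delta\in(0,1)$. Let $(\widehat{\boldsymbol\theta}_t)_{t\ge0}$ be generated by $\widehat{\boldsymbol\theta}_{t+1}\in\arg\min_{\boldsymbol\theta\in\Theta}\widehat{\mathscr G}_t(\boldsymbol\theta\mid\widehat{\boldsymbol\theta}_t)$, where $\widehat{\mathscr G}_t(\cdot\mid\cdot)$ are random approximations of $\mathscr G$ such that for every $t\ge0$, $$\mathbb P\Big(\max_{\boldsymbol\theta\in\Theta}\big|\mathscr G(\boldsymbol\theta\mid\widehat{\boldsymbol\theta}_t)-\widehat{\mathscr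 G}_t(\boldsymbol\theta\mid\widehat{\boldsymbol\theta}_t)\big|\le\tfrac{\varepsilon_t}{2}\ \Big|\ \widehat{\boldsymbol\theta}_t\Big)\ge1-\delta_t .$$ Then, with probability at least $1-\delta$, every accumulation point $\boldsymbol\theta^*$ of $(\widehat{\boldsymbol\theta}_t)$ is a first-order stationary point of $\mathscr F$ over $\Theta$, i.e. $\langle\nabla\mathscr F(\boldsymbol\theta^* ),\boldsymbol\theta-\boldsymbol\theta^*\rangle\ge0$ for all $\boldsymbol\theta\in\Theta$.
   Context: $\nabla_1\mathscr G(\boldsymbol\theta\mid\boldsymbol\theta')$ denotes the gradient of $\mathscr G$ with respect to its first argument $\boldsymbol\theta$, with the anchor $\boldsymbol\theta'$ held fixed. $\langle\cdot,\cdot\rangle$ is the Euclidean inner product. *)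

(* Defs.v *)
From HB Require Import structures.
From mathcomp Require Import all_boot all_order all_algebra.
From mathcomp Require Import all_classical all_reals all_analysis.
Set Implicit Arguments. Unset Strict Implicit. Unset Printing Implicit Defensive.
Import Order.TTheory GRing.Theory Num.Theory.
Import numFieldNormedType.Exports.
Local Open Scope classical_set_scope.
Local Open Scope ring_scope.

Section defs.
Context {R : realType} {p : nat}.

Definition dotv (u v : 'rV[R]_p) : R := \sum_(i < p) u ord0 i * v ord0 i.
Definition enorm (u : 'rV[R]_p) : R := Num.sqrt (dotv u u).

Definition gradient (f : 'rV[R]_p -> R) (x : 'rV[R]_p) : 'rV[R]_p :=
  \row_(i < p) ('d f x (delta_mx ord0 i : 'rV[R]_p)).

Definition grad1 (G : 'rV[R]_p -> 'rV[R]_p -> R) (th th' : 'rV[R]_p) : 'rV[R]_p :=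
  gradient (fun x => G x th') th.

Definition stationary (F : 'rV[R]_p -> R) (Theta : set 'rV[R]_p) (x : 'rV[R]_p) :=
  Theta x /\ forall y, Theta y -> 0 <= dotv (gradient F x) (y - x).

Definition borel_rV : set (set 'rV[R]_p) := <<s [set U | open U] >>.
End defs.

(* "P(A | X) >= c" (almost surely), for an event A and an R^p-valued random
   variable X, stated through the defining property of conditional
   probability given sigma(X): for every Borel set B,
   P(A /\ X in B) >= c * P(X in B). *)
Definition cond_prob_ge {R : realType} {p : nat} (d : measure_display)
  (Omega : measurableType d) (P : probability Omega R)
  (A : set Omega) (X : Omega -> 'rV[R]_p) (c : R) : Prop :=
  forall B : set 'rV[R]_p, borel_rV B ->
    (c%:E * P (X @^-1` B) <= P (A `&` (X @^-1` B)))%E.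

(* Main.v *)
Require Import Defs.
From HB Require Import structures.
From mathcomp Require Import all_boot all_order all_algebra.
From mathcomp Require Import all_classical all_reals all_analysis.
From mathcomp Require Import ring lra.
Import Order.TTheory GRing.Theory Num.Theory.
Import numFieldNormedType.Exports.
Local Open Scope classical_set_scope.
Local Open Scope ring_scope.

Section H.
Context {R : realType} {p : nat}.
Implicit Types u v w : 'rV[R]_p.

Lemma dotvC u v : dotv u v = dotv v u.
Proof. by apply: eq_bigr => i _; rewrite mulrC. Qed.

Lemma dotvDr u v w : dotv u (v + w) = dotv u v + dotv u w.
Proof. by rewrite /dotv -big_split; apply: eq_bigr => i _; rewrite !mxE mulrDr. Qed.

Lemma dotvZr (a : R) u v : dotv u (a *: v) = a * dotv u v.
Proof. by rewrite /dotv mulr_sumr; apply: eq_bigr => i _; rewrite !mxE mulrCA. Qed.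

Lemma dotvNr u v : dotv u (- v) = - dotv u v.
Proof. by rewrite -scaleN1r dotvZr mulN1r. Qed.

Lemma dotvBr u v w : dotv u (v - w) = dotv u v - dotv u w.
Proof. by rewrite dotvDr dotvNr. Qed.

Lemma dotvBl u v w : dotv (v - w) u = dotv v u - dotv w u.
Proof. by rewrite dotvC dotvBr !(dotvC u). Qed.

Lemma dotvZl (a : R) u v : dotv (a *: u) v = a * dotv u v.
Proof. by rewrite dotvC dotvZr dotvC. Qed.

Lemma dotvv_ge0 u : 0 <= dotv u u.
Proof. by apply: sumr_ge0 => i _; rewrite -expr2 sqr_ge0. Qed.

Lemma enorm_ge0 u : 0 <= enorm u.
Proof. exact: sqrtr_ge0. Qed.

Lemma enorm_sq u : enorm u ^+ 2 = dotv u u.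
Proof. by rewrite sqr_sqrtr // dotvv_ge0. Qed.

Lemma dot_am u v : 2 * dotv u v <= dotv u u + dotv v v.
Proof.
rewrite /dotv mulr_sumr -big_split; apply: ler_sum => i _.
set a := u ord0 i; set b := v ord0 i. rewrite -[X in _ <= X]/(a * a + b * b).
have := sqr_ge0 (a - b); rewrite expr2 => h.
have -> : a * a + b * b = (a - b) * (a - b) + 2 * (a * b) by ring.
by rewrite lerDr.
Qed.

Lemma dotv0_eq u : dotv u u = 0 -> forall v, dotv u v = 0.
Proof.
move=> /eqP; rewrite /dotv psumr_eq0; last by move=> i _; rewrite -expr2 sqr_ge0.
move=> /allP H v; apply: big1 => i _.
have := H i (mem_index_enum _); rewrite -expr2 sqrf_eq0 => /eqP ->.
by rewrite mul0r.
Qed.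

Lemma CS u v : dotv u v <= enorm u * enorm v.
Proof.
have [a0|an] := eqVneq (enorm u) 0.
  by rewrite (dotv0_eq _) ?a0 ?mul0r // -enorm_sq a0 expr0n.
have [b0|bn] := eqVneq (enorm v) 0.
  by rewrite dotvC (dotv0_eq _) ?b0 ?mulr0 // -enorm_sq b0 expr0n.
have ap : 0 < enorm u by rewrite lt_neqAle eq_sym an enorm_ge0.
have bp : 0 < enorm v by rewrite lt_neqAle eq_sym bn enorm_ge0.
have := dot_am ((enorm u)^-1 *: u) ((enorm v)^-1 *: v).
rewrite !dotvZl !dotvZr -!enorm_sq.
set a := enorm u; set b := enorm v; set d := dotv u v => h.
have e1 : a^-1 * (a^-1 * a ^+ 2) = 1 by rewrite expr2; field.
have e2 : b^-1 * (b^-1 * b ^+ 2) = 1 by rewrite expr2; field.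
rewrite e1 e2 in h.
have : a^-1 * (b^-1 * d) <= 1 by lra.
rewrite mulrA -invfM ler_pdivrMl ?mulr1 //; exact: mulr_gt0.
Qed.
Lemma d_dot (f : 'rV[R]_p -> R) z v : 'd f z v = dotv (gradient f z) v.
Proof.
rewrite {1}(row_sum_delta v) linear_sum /dotv; apply: eq_bigr => i _.
by rewrite linearZ /= mxE mulrC.
Qed.

Lemma t1 x w : (fun s : R => x + s *: w) = (cst x + (fun s : R => s *: w) : R -> 'rV[R]_p).
Proof. by []. Qed.
Lemma t2 (t:R) : 'd (@id R) t 1 = 1 :> R.
Proof. by rewrite diff_val. Qed.
Lemma t3 x (t:R) : 'd (cst x : R -> 'rV[R]_p) t 1 = 0.
Proof. by rewrite diff_cst. Qed.

Lemma t4 x w (t : R) : differentiable (cst x + (fun s : R => s *: w) : R -> 'rV[R]_p) t.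
Proof.
have di : differentiable (@id R) t by exact: ex_diff.
have d1 : differentiable (fun s : R => s *: w) t by apply: differentiableZl.
have dc : differentiable (cst x : R -> 'rV[R]_p) t by exact: ex_diff.
exact: differentiableD.
Qed.
Lemma t5 x w (t : R) : 'd (cst x + (fun s : R => s *: w) : R -> 'rV[R]_p) t 1 = w.
Proof.
have di : differentiable (@id R) t by exact: ex_diff.
have d1 : differentiable (fun s : R => s *: w) t by apply: differentiableZl.
have dc : differentiable (cst x : R -> 'rV[R]_p) t by exact: ex_diff.
rewrite (diffD dc d1).
transitivity ('d (cst x : R -> 'rV[R]_p) t 1 + 'd (fun s : R => s *: w) t 1).
 by [].
apply: (@eq_trans _ _ (0 + w)); last by rewrite add0r.
congr (_ + _).
exact: t3.
have E2 := congr1 (fun f => f 1) (diffZl w di).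
apply: etrans E2 _.
apply: etrans (congr1 (fun r => r *: w) (t2 t)) _.
exact: scale1r.
Qed.
Lemma line_diff x w (t : R) : differentiable (fun s : R => x + s *: w) t /\
   'd (fun s : R => x + s *: w) t 1 = w.
Proof. by rewrite t1; split; [exact: t4|exact: t5]. Qed.

Lemma enormZ u (c : R) : 0 <= c -> enorm (c *: u) = c * enorm u.
Proof.
move=> c0; rewrite /enorm dotvZl dotvZr mulrA sqrtrM.
  rewrite -expr2 sqrtr_sqr ger0_norm //. exact: mulr_ge0.
Qed.

Lemma descent (g : 'rV[R]_p -> R) (K : set 'rV[R]_p) (L : R) x y s :
  (forall z, K z -> differentiable g z) ->
  (forall t, 0 <= t <= 1 -> K (x + t *: (y - x))) ->
  (forall a b, K a -> K b -> enorm (gradient g a - gradient g b) <= L * enorm (a - b)) ->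
  0 <= s <= 1 ->
  g (x + s *: (y - x)) <= g x + s * dotv (gradient g x) (y - x)
                          + `|L| * s ^+ 2 * enorm (y - x) ^+ 2.
Proof.
move=> dg Kseg Lip /andP[s0 s1].
set w := y - x.
have Kx : K x by have := Kseg 0; rewrite scale0r addr0 lexx ler01; apply.
have [->|sn0] := eqVneq s 0.
  by rewrite scale0r addr0 mul0r expr0n /= mulr0 mul0r !addr0.
have sp : 0 < s by rewrite lt_neqAle eq_sym sn0.
pose h := g \o (fun t : R => x + t *: w).
pose df t := dotv (gradient g (x + t *: w)) w.
have dh : forall t : R, 0 <= t <= 1 -> differentiable h t.
  move=> t tI; apply: differentiable_comp; first exact: (line_diff x w t).1.
  exact: dg (Kseg t tI).
have [c cin hc] : exists2 c, c \in `]0, s[%R & h s - h 0 = df c * (s - 0).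
  apply: MVT => //.
  - move=> t; rewrite in_itv /= => /andP[t0 ts].
    have tI : 0 <= t <= 1 by rewrite ltW //= (le_trans (ltW ts)).
    apply: DeriveDef; first exact: diff_derivable (dh t tI).
    rewrite deriveE; last exact: dh.
    rewrite diff_comp; [|exact: (line_diff x w t).1|exact: dg (Kseg t tI)].
    by rewrite /= (line_diff x w t).2 d_dot.
  - apply: continuous_in_subspaceT => t; rewrite inE /= in_itv /= => /andP[t0 ts].
    have tI : 0 <= t <= 1 by rewrite t0 /= (le_trans ts).
    exact: differentiable_continuous (dh t tI).
move: cin; rewrite in_itv /= => /andP[c0 cs].
have cI : 0 <= c <= 1 by rewrite ltW //= ltW // (lt_le_trans cs).
have hs : h s = g (x + s *: w) by [].
have h0 : h 0 = g x by rewrite /h /= scale0r addr0.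
rewrite hs h0 subr0 in hc.
have e1 : df c = dotv (gradient g x) w + dotv (gradient g (x + c *: w) - gradient g x) w.
  by rewrite dotvBl addrC subrK.
have e2 := CS (gradient g (x + c *: w) - gradient g x) w.
have e3 := Lip _ _ (Kseg c cI) Kx.
have e4 : x + c *: w - x = c *: w by rewrite addrC addKr.
have cge : 0 <= c := ltW c0.
rewrite e4 (enormZ w c cge) in e3.
have en0 := enorm_ge0 w.
have e5 : L * (c * enorm w) <= `|L| * (s * enorm w).
  have h1 : L * (c * enorm w) <= `|L| * (c * enorm w).
    apply: ler_wpM2r; [exact: mulr_ge0 (ltW c0) en0 | exact: ler_norm].
  have h2 : `|L| * (c * enorm w) <= `|L| * (s * enorm w).
    apply: ler_wpM2l; [exact: normr_ge0 | apply: ler_wpM2r => //; exact: ltW].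
  exact: le_trans h1 h2.
have e6 : df c <= dotv (gradient g x) w + `|L| * (s * enorm w) * enorm w.
  rewrite e1 lerD2l.
  exact: le_trans e2 (ler_wpM2r en0 (le_trans e3 e5)).
have : g (x + s *: w) - g x <= (dotv (gradient g x) w + `|L| * (s * enorm w) * enorm w) * s.
  by rewrite hc ler_wpM2r // ltW.
rewrite !expr2; lra.
Qed.

Lemma dotv_cvg {T} (Fl : set_system T) {FF : Filter Fl} (a b : T -> 'rV[R]_p) a0 b0 :
  a @ Fl --> a0 -> b @ Fl --> b0 -> (fun z => dotv (a z) (b z)) @ Fl --> dotv a0 b0.
Proof.
move=> ha hb; rewrite /dotv.
apply: (cvg_big (op:=+%R) (x0:=0) (P:=xpredT)).
- exact: add_continuous.
- move=> i _; apply: cvgM.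
  + exact: (continuous_cvg _ (@coord_continuous R 1 p ord0 i a0) ha).
  + exact: (continuous_cvg _ (@coord_continuous R 1 p ord0 i b0) hb).
Qed.

Lemma convex_seg (Th : set 'rV[R]_p) a b t :
  convex_set (Th : set (convex_lmodType 'rV[R]_p)) -> Th a -> Th b -> 0 <= t <= 1 ->
  Th (a + t *: (b - a)).
Proof.
move=> cv Ha Hb /andP[t0 t1].
have := cv b a (Itv01 t0 t1); rewrite !inE => /(_ Hb Ha).
congr Th; rewrite /conv /=.
by rewrite /unstable.onem scalerBl scale1r scalerBr [RHS]addrCA.
Qed.
End H.
Arguments dotv_cvg {R p T Fl FF a b a0 b0}.

Section D.
Context {R : realType} {p : nat}.

Lemma phi_mono (phi : nat -> R) : (forall T, phi T.+1 <= phi T) ->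
  forall n T, phi (T + n)%N <= phi T.
Proof.
move=> h; elim=> [|n IH] T; first by rewrite addn0.
by rewrite addnS; apply: le_trans (h _) (IH T).
Qed.

Lemma det (Theta U : set 'rV[R]_p) (F : 'rV[R]_p -> R) (G : 'rV[R]_p -> 'rV[R]_p -> R)
  (L M E : R) (eps : nat -> R) (x : nat -> 'rV[R]_p) :
  closed Theta -> convex_set (Theta : set (convex_lmodType 'rV[R]_p)) -> Theta `<=` U ->
  {within U, continuous (gradient F)} ->
  (forall th th', Theta th -> Theta th' -> differentiable (fun x => G x th') th) ->
  (forall th, Theta th -> G th th = F th) ->
  (forall th, Theta th -> grad1 G th th = gradient F th) ->
  (forall th', Theta th' -> forall x y, Theta x -> Theta y ->
     enorm (grad1 G x th' - grad1 G y th') <= L * enorm (x - y)) ->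
  (forall z, Theta z -> - M <= F z) ->
  (forall T, \sum_(t < T) eps t <= E) ->
  (forall t, Theta (x t)) ->
  (forall t th, Theta th -> F (x t.+1) <= G th (x t) + eps t) ->
  forall ths, cluster (x @ \oo) ths -> stationary F Theta ths.
Proof.
move=> cl cv sub gc dG tan1 tan2 Lip Mb Eb xT step ths cth.
have Ths : Theta ths.
  rewrite (closure_id Theta).1 //.
  move: cth; rewrite clusterE => /(_ Theta); apply.
  change (\forall t \near \oo, Theta (x t)); exact: filterE.
split => // y Ty.
rewrite leNgt; apply/negP => hneg.
set c := - dotv (gradient F ths) (y - ths).
have c0 : 0 < c by rewrite oppr_gt0.
set K := enorm (y - ths) ^+ 2 + 1.
have Un : U ths by exact: sub.
have cg : gradient F @ within U (nbhs ths) --> gradient F ths.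
  exact: (subspace_continuousP U (gradient F)).1 gc ths Un.
have cid : (fun z => y - z) @ within U (nbhs ths) --> y - ths.
  apply: cvg_within_filter; apply: cvgB; [exact: cvg_cst | exact: cvg_id].
have WF : Filter (within U (nbhs ths)) := within_filter U (nbhs_filter ths).
have c1 := @dotv_cvg _ _ _ _ WF _ _ _ _ cg cid.
have c2 := @dotv_cvg _ _ _ _ WF _ _ _ _ cid cid.
have n1 : \forall z \near within U (nbhs ths), dotv (gradient F z) (y - z) < - c / 2.
  apply: (cvgr_lt (FF:=WF) _ c1); rewrite /c opprK; lra.
have n2 : \forall z \near within U (nbhs ths), dotv (y - z) (y - z) < K.
  apply: (cvgr_lt (FF:=WF) _ c2); rewrite /K -enorm_sq; lra.
have nb0 := @filterI _ _ WF _ _ n1 n2.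
have nb : nbhs ths (fun z => U z -> dotv (gradient F z) (y - z) < - c / 2 /\ dotv (y - z) (y - z) < K) := nb0.
have inf : forall m, exists t, (m <= t)%N /\
    dotv (gradient F (x t)) (y - x t) < - c / 2 /\ dotv (y - x t) (y - x t) < K.
  move=> m.
  have A1 : (x @ \oo) (x @` [set t | (m <= t)%N]).
    change (\forall t \near \oo, (x @` [set t | (m <= t)%N]) (x t)).
    by apply: filterS (nbhs_infty_ge m) => t ht; exists t.
  have [z [[t mt <-] hz]] := cth _ _ A1 nb.
  by exists t; split => //; apply: hz; apply: sub.
have K1 : 1 <= K by rewrite /K lerDr sqr_ge0.
have K0 : 0 < K by lra.
set D := 4 * ((`|L| + 1) * K).
have D0 : 0 < D by rewrite /D; apply: mulr_gt0 => //; apply: mulr_gt0 => //; 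
  have := normr_ge0 L; lra.
set s0 := Num.min 1 (c / D).
have s0p : 0 < s0 by rewrite /s0 lt_min ltr01 divr_gt0.
have s01 : s0 <= 1 by rewrite /s0 ge_min lexx.
have s0D : s0 * D <= c.
  have : s0 <= c / D by rewrite /s0 ge_min lexx orbT.
  by rewrite ler_pdivlMr.
have sL : `|L| * s0 * K <= c / 4.
  have : `|L| * s0 * K <= (`|L| + 1) * s0 * K.
    by apply: ler_wpM2r; [lra | apply: ler_wpM2r; [lra | lra]].
  move: s0D; rewrite /D => h1 h2.
  have e : (`|L| + 1) * s0 * K = (s0 * (4 * ((`|L| + 1) * K))) / 4 by field.
  lra.
set eta := s0 * c / 4.
have eta0 : 0 < eta by rewrite /eta; apply: divr_gt0 => //; exact: mulr_gt0.
have stepnear : forall t, dotv (gradient F (x t)) (y - x t) < - c / 2 ->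
    dotv (y - x t) (y - x t) < K -> F (x t.+1) <= F (x t) - eta + eps t.
  move=> t h1 h2.
  have hd := descent (fun z => G z (x t)) Theta L (x t) y s0
    (fun z hz => dG z (x t) hz (xT t))
    (fun tau htau => convex_seg _ _ _ _ cv (xT t) Ty htau)
    (Lip (x t) (xT t)) ltac:(rewrite (ltW s0p) s01).
  have hs := step t _ (convex_seg _ _ _ _ cv (xT t) Ty (ltac:(rewrite (ltW s0p) s01) : 0 <= s0 <= 1)).
  have ge : gradient (fun z => G z (x t)) (x t) = gradient F (x t) := tan2 _ (xT t).
  rewrite ge tan1 ?xT // enorm_sq in hd.
  set d := dotv (gradient F (x t)) (y - x t) in h1 hd.
  set e2 := dotv (y - x t) (y - x t) in h2 hd.
  have a1 : s0 * d <= s0 * (- c / 2) by rewrite ler_pM2l // ltW.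
  have a2 : `|L| * s0 ^+ 2 * e2 <= `|L| * s0 ^+ 2 * K.
    by rewrite ler_wpM2l ?mulr_ge0 ?sqr_ge0 // ltW.
  have a3 : `|L| * s0 ^+ 2 * K = s0 * (`|L| * s0 * K) by rewrite expr2; ring.
  have a4 : s0 * (`|L| * s0 * K) <= s0 * (c / 4) by rewrite ler_pM2l.
  rewrite /eta; lra.
have gen : forall t, F (x t.+1) <= F (x t) + eps t.
  by move=> t; have := step t (x t) (xT t); rewrite tan1.
pose phi T := F (x T) - \sum_(t < T) eps t.
have phiS : forall T, phi T.+1 <= phi T.
  move=> T; rewrite /phi big_ord_recr /=; have := gen T; lra.
have phiN : forall t, dotv (gradient F (x t)) (y - x t) < - c / 2 ->
    dotv (y - x t) (y - x t) < K -> phi t.+1 <= phi t - eta.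
  move=> t h1 h2; rewrite /phi big_ord_recr /=; have := stepnear t h1 h2; lra.
have claim : forall k : nat, exists T, phi T <= phi 0%N - k%:R * eta.
  elim => [|k [T hT]]; first by exists 0%N; rewrite mul0r subr0.
  have [t [Tt [h1 h2]]] := inf T.
  exists t.+1.
  have := phi_mono _ phiS (t - T) T; rewrite subnKC // => hm.
  have := phiN t h1 h2; rewrite -[k.+1]addn1 natrD mulrDl mul1r; lra.
have lower : forall T, - M - E <= phi T.
  by move=> T; rewrite /phi; have := Mb _ (xT T); have := Eb T; lra.
set X := phi 0%N + M + E.
have [T hT] := claim (Num.truncn (X / eta)).+1.
have hk := truncnS_gt (X / eta).
rewrite ltr_pdivrMr // in hk.
have := lower T; rewrite /X in hk; lra.
Qed.
End D.

Lemma ecase (R : realType) (q : \bar R) (a : R) : (0 <= q)%E -> (q <= 1)%E -> (a%:E <= q)%E ->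
  (1 - q <= (1 - a)%:E)%E.
Proof.
case: q => [r| |] //= q0 q1 aq.
by rewrite -EFinB lee_fin; rewrite !lee_fin in q0 q1 aq; lra.
Qed.

Lemma ecase2 (R : realType) (q : \bar R) (a : R) : (0 <= q)%E -> (q <= a%:E)%E ->
  ((1 - a)%:E <= 1 - q)%E.
Proof.
case: q => [r| |] //= q0 aq.
by rewrite -EFinB lee_fin; rewrite !lee_fin in q0 aq; lra.
Qed.

Theorem theorem4p4 (R : realType) (p : nat)
  (Theta U : set 'rV[R]_p)
  (F : 'rV[R]_p -> R) (G : 'rV[R]_p -> 'rV[R]_p -> R) (L : R)
  (eps dlt : nat -> R) (delta : R)
  (d : measure_display) (Omega : measurableType d) (P : probability Omega R)
  (thh : nat -> Omega -> 'rV[R]_p)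
  (Gh : nat -> Omega -> 'rV[R]_p -> 'rV[R]_p -> R) :
  compact Theta ->
  convex_set (Theta : set (convex_lmodType 'rV[R]_p)) ->
  open U -> Theta `<=` U ->
  (forall x, U x -> differentiable F x) ->
  {within U, continuous (gradient F)} ->
  (forall th th', Theta th -> Theta th' -> differentiable (fun x => G x th') th) ->
  (forall th th', Theta th -> Theta th' -> F th <= G th th') ->
  (forall th, Theta th -> G th th = F th) ->
  (forall th, Theta th -> grad1 G th th = gradient F th) ->
  (forall th', Theta th' -> forall x y, Theta x -> Theta y ->
     enorm (grad1 G x th' - grad1 G y th') <= L * enorm (x - y)) ->
  (forall t, 0 < eps t) -> (forall t, 0 < dlt t) ->
  (\sum_(0 <= t <oo) (eps t)%:E < +oo)%E ->
  0 < delta < 1 ->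
  (\sum_(0 <= t <oo) (dlt t)%:E <= delta%:E)%E ->
  (forall w, Theta (thh 0%N w)) ->
  (forall t B, borel_rV B -> measurable (thh t @^-1` B)) ->
  (forall t w, Theta (thh t.+1 w) /\
     forall th, Theta th -> Gh t w (thh t.+1 w) (thh t w) <= Gh t w th (thh t w)) ->
  (forall t, measurable [set w | forall th, Theta th ->
       `|G th (thh t w) - Gh t w th (thh t w)| <= eps t / 2]) ->
  (forall t, cond_prob_ge P
       [set w | forall th, Theta th ->
          `|G th (thh t w) - Gh t w th (thh t w)| <= eps t / 2]
       (thh t) (1 - dlt t)) ->
  exists S : set Omega, measurable S /\ ((1 - delta)%:E <= P S)%E /\
    forall w, S w -> forall th_star,
      cluster ((fun t => thh t w) @ \oo) th_star -> stationary F Theta th_star.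
Proof.
move=> cpt cv oU sub dF gc dG maj tan1 tan2 Lip eps0 dlt0 epsS dI dltS th0 thm argm Em Ec.
set E := fun t => [set w | forall th, Theta th ->
          `|G th (thh t w) - Gh t w th (thh t w)| <= eps t / 2].
exists (\bigcap_t E t); split; first exact: bigcapT_measurable.
split.
  have bT : borel_rV (setT : set 'rV[R]_p).
    by apply: sub_sigma_algebra; exact: openT.
  have PE : forall t, ((1 - dlt t)%:E <= P (E t))%E.
    move=> t; have := Ec t setT bT.
    by rewrite preimage_setT setIT probability_setT mule1.
  have PC : forall t, (P (~` E t) <= (dlt t)%:E)%E.
    move=> t; rewrite (probability_setC P (Em t)).
    have := @ecase _ _ _ (measure_ge0 P (E t)) (probability_le1 P (Em t)) (PE t).
    have e : (1 - (1 - dlt t) = dlt t :> R) by lra.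
    by rewrite e.
  have mS : measurable (\bigcap_t E t) by exact: bigcapT_measurable.
  have U1 : (P (~` \bigcap_t E t) <= \sum_(0 <= t <oo) P (~` E t))%E.
    apply: (@measure_sigma_subadditive _ _ _ P (~` \bigcap_t E t) (fun t => ~` E t)).
    - by move=> n; exact: measurableC (Em n).
    - exact: measurableC mS.
    - by rewrite setC_bigcap.
  have U2 : (\sum_(0 <= t <oo) P (~` E t) <= \sum_(0 <= t <oo) (dlt t)%:E)%E.
    by apply: lee_nneseries => // n _ _.
  have U3 := le_trans U1 (le_trans U2 dltS).
  have := probability_setC P (measurableC mS); rewrite setCK => ->.
  exact: ecase2 (measure_ge0 P _) U3.
move=> w Sw ths cth.
have xT : forall t, Theta (thh t w).
  by move=> t; case: t => [|t]; [exact: th0 | exact: (argm t w).1].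
have Fc : {within Theta, continuous F}.
  apply: continuous_in_subspaceT => z /set_mem hz.
  exact: differentiable_continuous (dF z (sub z hz)).
have bA := compact_bounded (continuous_compact Fc cpt).
have bA2 : \forall M \near +oo, forall r, (F @` Theta) r -> `|r| <= M := bA.
have [M hM] := filter_ex bA2.
have Mb : forall z, Theta z -> - M <= F z.
  move=> z hz; have := hM (F z) (ex_intro2 _ _ z hz erefl).
  by rewrite ler_norml => /andP[].
have sge0 : (0 <= \sum_(0 <= t <oo) (eps t)%:E)%E.
  by apply: nneseries_ge0 => n _ _; rewrite lee_fin ltW.
have Eb : forall T, \sum_(t < T) eps t <= fine (\sum_(0 <= t <oo) (eps t)%:E).
  move=> T; rewrite -lee_fin fineK; last by rewrite ge0_fin_numE.
  have := @nneseries_lim_ge R (fun t => (eps t)%:E) xpredT 0%N T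
    (fun n _ _ => ltW (eps0 n)).
  by rewrite big_mkord sumEFin.
apply: (det Theta U F G L M _ eps (fun t => thh t w)) => //.
- apply: compact_closed => //; exact: norm_hausdorff.
- move=> t th hth.
  have hS := Sw t I th hth.
  have hS2 := Sw t I (thh t.+1 w) (xT t.+1).
  have h1 := maj _ _ (xT t.+1) (xT t).
  have h2 := (argm t w).2 th hth.
  move: hS hS2; rewrite !ler_norml => /andP[a1 a2] /andP[b1 b2].
  lra.
Qed.
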